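(* Let $T$ be a tree with $n>2$ vertices and let Algorithm 2 be applied to $T$ with gravity root $r$ (placed at the origin). Let $u$ be a vertex drawn on the $Y$-axis (i.e., with $x$-coordinate $0$), at position $(0,y_u)$, and let $\phi_u=a_2(u)-a_1(u)$. Put $B=(|T_u|-1)\cdot\frac{\pi}{2}\cdot\frac{n-\mathrm{odd}(n)}{n-1}\cdot\frac{1}{\phi_u}$. Then every vertex $w$ of $T_u$, drawn at $(x_w,y_w)$, satisfies $0\le y_w-y_u\le B$ and $|x_w|\le B$. (Equivalently, both the part of the drawing of $T_u$ lying in the closed first quadrant $x\ge0$ and the part lying in the closed second quadrant $x\le0$ fit in grids of side-length $B$.)
   Context: A vertex $r$ of an $n$-vertex tree $T$ is a gravity root if every connected component of $T\setminus r$ has at most $\frac{n}{2}$ vertices. $\mathrm{odd}(n)=1$ if $n$ is odd, $0$ otherwise. $T_v$ is the subtree rooted at $v$, $|T_v|$ its number of vertices. Strategy 1: for a non-leaf vertex $u$ with assigned $a_1(u)<a_2(u)$ and children $v_1,\dots,v_m$ in order, set $a_1(v_1)=a_1(u)$, $a_1(v_i)=a_2(v_{i-1})$ for $1<i\le m$, and $a_2(v_i)=a_1(v_i)+(a_2(u)-a_1(u))\cdot\frac{|T_{v_i}|}{|T_u|-1}$. Point rule $P_1(\theta_1,\theta_2)$ for $0\le\theta_1<\theta_2\le\frac{\pi}{2}$, with $d=\lceil\frac{1}{\theta_2-\theta_1}\rceil$: (i) if $\theta_2-\theta_1>\frac{\pi}{4}$: $(1,1)$; (ii) if $\arctan(\frac12)<\theta_2-\theta_1\le\frac{\pi}{4}$: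 $(1,2)$ if $\theta_1\ge\frac{\pi}{4}$, $(1,1)$ if $\arctan(\frac12)\le\theta_1<\frac{\pi}{4}$, $(2,1)$ if $\theta_1<\arctan(\frac12)$; (iii) if $\theta_2-\theta_1\le\arctan(\frac12)$: $(d,\lfloor\tan(\theta_1)d+1\rfloor)$ if $\theta_2\le\frac{\pi}{4}$, $(1,1)$ if $\theta_1<\frac{\pi}{4}<\theta_2$, $(\lfloor\tan(\frac{\pi}{2}-\theta_2)d+1\rfloor,d)$ if $\theta_1\ge\frac{\pi}{4}$. Point rule $P_2(\beta_1,\beta_2)$ for $0\le\beta_1<\beta_2\le\pi$: $(0,1)$ if $\beta_1<\frac{\pi}{2}<\beta_2$; $P_1(\beta_1,\beta_2)$ if $\beta_2\le\frac{\pi}{2}$; $(-x,y)$ with $(x,y)=P_1(\pi-\beta_2,\pi-\beta_1)$ if $\beta_1\ge\frac{\pi}{2}$. Algorithm 2 (input: a tree $T$, possibly with a cyclic order of neighbors at each vertex): choose a gravity root $r$ and root $T$ at $r$ (children ordered according to the given embedding, if any); set $a_1(r)=0$, $a_2(r)=\pi$, assign angles to all other vertices top-down by Strategy 1; place $r$ at $(0,0)$; top-down, place each child $v$ of an already placed vertex $u$ at (position of $u$) $+P_2(a_1(v),a_2(v))$. *)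

(* Defs.v *)
From Stdlib Require Import Reals List Arith.
Open Scope R_scope.

(* A rooted tree whose children are ordered (rose tree).  Rooting the input
   tree T at the chosen vertex r, with children ordered by the embedding,
   gives such a tree; conversely every such tree arises this way. *)
Inductive tree : Type := Node : list tree -> tree.

Definition children (t : tree) : list tree := match t with Node ts => ts end.

Fixpoint size (t : tree) : nat :=
  match t with Node ts => S (fold_right (fun c acc => (size c + acc)%nat) 0%nat ts) end.

(* r is a gravity root: every component of T \ r (= the subtree of a child of r)
   has at most n/2 vertices. *)
Definition gravity_rooted (t : tree) : Prop :=
  forall c, In c (children t) -> (2 * size c <= size t)%nat.

Definition floorR (x : R) : Z := Int_part x.
Definition ceilR (x : R) : Z := (- Int_part (- x))%Z.

Definition P1 (t1 t2 : R) : R * R :=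
  let d := IZR (ceilR (1 / (t2 - t1))) in
  if Rlt_dec (PI / 4) (t2 - t1) then (1, 1)
  else if Rlt_dec (atan (1 / 2)) (t2 - t1) then
    (if Rle_dec (PI / 4) t1 then (1, 2)
     else if Rle_dec (atan (1 / 2)) t1 then (1, 1)
     else (2, 1))
  else
    (if Rle_dec t2 (PI / 4) then (d, IZR (floorR (tan t1 * d + 1)))
     else if Rlt_dec t1 (PI / 4) then (1, 1)
     else (IZR (floorR (tan (PI / 2 - t2) * d + 1)), d)).

Definition P2 (b1 b2 : R) : R * R :=
  if Rle_dec b2 (PI / 2) then P1 b1 b2
  else if Rlt_dec b1 (PI / 2) then (0, 1)
  else let p := P1 (PI - b2) (PI - b1) in (- fst p, snd p).

Record vinfo : Type := VInfo {
  addr : list nat;   (* address of the vertex: child indices from the root *)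
  ang1 : R;
  ang2 : R;
  posx : R;
  posy : R;
  sub  : tree
}.

(* Algorithm 2 (Strategy 1 + point rule P2), applied top-down to the subtree t
   whose root has address ad, angles a1 < a2 and is placed at (x, y). *)
Fixpoint draw (t : tree) (ad : list nat) (a1 a2 x y : R) {struct t} : list vinfo :=
  match t with
  | Node ts =>
      VInfo ad a1 a2 x y t ::
      (fix go (cs : list tree) (k : nat) (b : R) {struct cs} : list vinfo :=
         match cs with
         | nil => nil
         | c :: cs' =>
             let b2 := b + (a2 - a1) * (INR (size c) / (INR (size t) - 1)) in
             let p := P2 b b2 in
             draw c (ad ++ k :: nil) b b2 (x + fst p) (y + snd p)
               ++ go cs' (S k) b2
         end) ts 0%nat a1
  end.

Definition algorithm2 (t : tree) : list vinfo := draw t nil 0 PI 0 0.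

Definition in_subtree (u w : vinfo) : Prop := exists s, addr w = addr u ++ s.

Definition oddR (n : nat) : R := if Nat.odd n then 1 else 0.

(* Main.v *)
Require Import Defs.
From Stdlib Require Import Reals Lra Lia ZArith List Arith.
Open Scope R_scope.
Lemma cos1 : 1/2 <= cos 1.
Proof. assert (H1:= PI2_1). assert (H:=COS 1 ltac:(lra) ltac:(lra)). destruct H as [H _].
unfold cos_lb, cos_approx, cos_term in H. simpl in H. lra. Qed.
Lemma atan_half : atan (1/2) <= PI/2 - 1.
Proof.
  destruct (Rle_dec (atan (1/2)) (PI/2-1)) as [h|h]; auto. exfalso.
  assert (H1:= PI2_1). pose proof cos1.
  destruct (atan_bound (1/2)) as [a b].
  assert (tan (PI/2 - 1) < tan (atan (1/2))) by (apply tan_increasing; lra).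
  rewrite tan_atan in H0. unfold tan in H0. rewrite sin_shift, cos_shift in H0.
  assert (0 < sin 1) by (apply sin_gt_0; lra).
  pose proof (SIN_bound 1).
  apply (Rmult_lt_compat_r (sin 1)) in H0; auto.
  unfold Rdiv in H0. rewrite Rmult_assoc, Rinv_l in H0 by lra. lra.
Qed.

Lemma le_div_pos a c p : 0 < p -> a * p <= c -> a <= c / p.
Proof. intros Hp H. apply (Rmult_le_reg_r p); auto. unfold Rdiv.
  rewrite Rmult_assoc, Rinv_l by lra. lra. Qed.

Lemma floor_le (D : Z) tv : 0 <= tv < 1 -> 0 < IZR D ->
  0 <= IZR (floorR (tv * IZR D + 1)) <= IZR D.
Proof.
  intros Ht HD. unfold floorR. destruct (base_Int_part (tv * IZR D + 1)) as [a b].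
  assert (0 <= tv * IZR D) by (apply Rmult_le_pos; lra).
  assert (tv * IZR D < IZR D) by (rewrite <- (Rmult_1_l (IZR D)) at 2; apply Rmult_lt_compat_r; lra).
  split. 
  - assert (IZR (Int_part (tv * IZR D + 1)) > 0) by lra. lra.
  - assert (IZR (Int_part (tv * IZR D + 1)) < IZR (D + 1)) by (rewrite plus_IZR; lra).
    apply lt_IZR in H1. apply IZR_le. lia.
Qed.

Lemma ceil_facts z : 0 < z -> z <= IZR (ceilR z) < z + 1.
Proof. intros Hz. unfold ceilR. rewrite opp_IZR. destruct (base_Int_part (- z)). lra. Qed.

Lemma tan_small t : 0 <= t < PI/4 -> 0 <= tan t < 1.
Proof. intros [h1 h2]. pose proof PI_RGT_0. split.
  - destruct (Req_dec t 0) as [->|]. rewrite tan_0; lra.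
    rewrite <- tan_0. left. apply tan_increasing; lra.
  - rewrite <- tan_PI4. apply tan_increasing; lra.
Qed.

Lemma P1_bound t1 t2 : 0 <= t1 -> t1 < t2 -> t2 <= PI/2 ->
  0 <= fst (P1 t1 t2) <= (PI/2)/(t2-t1) /\ 0 <= snd (P1 t1 t2) <= (PI/2)/(t2-t1).
Proof.
  intros h1 h2 h3. pose proof PI2_1. pose proof atan_half.
  assert (Hp: 0 < t2 - t1) by lra.
  assert (G1: 1 <= (PI/2)/(t2-t1)) by (apply le_div_pos; lra).
  unfold P1.
  destruct (Rlt_dec (PI/4) (t2-t1)) as [c1|c1]; [simpl; lra|].
  assert (G2: 2 <= (PI/2)/(t2-t1)) by (apply le_div_pos; lra).
  destruct (Rlt_dec (atan (1/2)) (t2-t1)) as [c2|c2].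
  { destruct (Rle_dec (PI/4) t1); [simpl; lra|].
    destruct (Rle_dec (atan (1/2)) t1); simpl; lra. }
  pose proof (ceil_facts (1/(t2-t1)) ltac:(apply Rdiv_lt_0_compat; lra)) as [d1 d2].
  assert (Hd: IZR (ceilR (1/(t2-t1))) <= (PI/2)/(t2-t1)).
  { apply le_div_pos; auto.
    assert (IZR (ceilR (1/(t2-t1))) * (t2-t1) < (1/(t2-t1) + 1) * (t2-t1))
      by (apply Rmult_lt_compat_r; lra).
    assert ((1/(t2-t1) + 1) * (t2-t1) = 1 + (t2 - t1)) by (field; lra). lra. }
  assert (Hd0: 0 < IZR (ceilR (1/(t2-t1)))).
  { assert (0 < 1/(t2-t1)) by (apply Rdiv_lt_0_compat; lra). lra. }
  destruct (Rle_dec t2 (PI/4)).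
  { simpl. pose proof (tan_small t1 ltac:(lra)).
    pose proof (floor_le (ceilR (1/(t2-t1))) (tan t1) H1 Hd0). lra. }
  destruct (Rlt_dec t1 (PI/4)); [simpl; lra|].
  simpl. pose proof (tan_small (PI/2 - t2) ltac:(lra)).
  pose proof (floor_le (ceilR (1/(t2-t1))) (tan (PI/2 - t2)) H1 Hd0). lra.
Qed.

Fixpoint sumsize (ts : list tree) : nat :=
  match ts with nil => 0%nat | c :: cs => (size c + sumsize cs)%nat end.

Lemma size_node ts : size (Node ts) = S (sumsize ts).
Proof. simpl. f_equal. Qed.

Definition go (t : tree) (ad : list nat) (a1 a2 x y : R) :=
      (fix go (cs : list tree) (k : nat) (b : R) {struct cs} : list vinfo :=
         match cs with
         | nil => nil
         | c :: cs' =>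
             let b2 := b + (a2 - a1) * (INR (size c) / (INR (size t) - 1)) in
             let p := P2 b b2 in
             draw c (ad ++ k :: nil) b b2 (x + fst p) (y + snd p)
               ++ go cs' (S k) b2
         end).

Lemma draw_eq ts ad a1 a2 x y : draw (Node ts) ad a1 a2 x y =
  VInfo ad a1 a2 x y (Node ts) :: go (Node ts) ad a1 a2 x y ts 0 a1.
Proof. reflexivity. Qed.
Lemma go_nil t ad a1 a2 x y k b : go t ad a1 a2 x y nil k b = nil.
Proof. reflexivity. Qed.
Lemma go_cons t ad a1 a2 x y c cs k b : go t ad a1 a2 x y (c :: cs) k b =
  let b2 := b + (a2 - a1) * (INR (size c) / (INR (size t) - 1)) in
  let p := P2 b b2 in
  draw c (ad ++ k :: nil) b b2 (x + fst p) (y + snd p) ++ go t ad a1 a2 x y cs (S k) b2.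
Proof. reflexivity. Qed.

Fixpoint tree_ind' (P : tree -> Prop) (H : forall ts, Forall P ts -> P (Node ts)) (t : tree) : P t :=
  match t with
  | Node ts => H ts ((fix g (l : list tree) : Forall P l :=
      match l with nil => Forall_nil P | c :: cs => Forall_cons c (tree_ind' P H c) (g cs) end) ts)
  end.

Lemma P2_bound K b1 b2 : PI/2 <= K -> 0 <= b1 -> b1 < b2 -> b2 <= PI -> b2 - b1 <= K ->
  0 <= snd (P2 b1 b2) <= K * (1/(b2-b1)) /\ Rabs (fst (P2 b1 b2)) <= K * (1/(b2-b1)).
Proof.
  intros HK h1 h2 h3 h4.
  assert (Hp: 0 < b2 - b1) by lra.
  assert (E: forall z, z <= (PI/2)/(b2-b1) -> z <= K * (1/(b2-b1))).
  { intros z Hz. assert ((PI/2)/(b2-b1) <= K * (1/(b2-b1))).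
    { unfold Rdiv. rewrite Rmult_1_l. apply Rmult_le_compat_r; [left; apply Rinv_0_lt_compat; lra | lra]. }
    lra. }
  unfold P2. destruct (Rle_dec b2 (PI/2)).
  { destruct (P1_bound b1 b2 h1 h2 r). rewrite Rabs_pos_eq by lra. split; [split|]; try lra; apply E; lra. }
  destruct (Rlt_dec b1 (PI/2)).
  { simpl. rewrite Rabs_R0. assert (1 <= K * (1/(b2-b1))).
    { replace (K * (1/(b2-b1))) with (K/(b2-b1)) by (field; lra). apply le_div_pos; lra. }
    assert (0 <= K * (1/(b2-b1))) by lra. lra. }
  simpl. destruct (P1_bound (PI - b2) (PI - b1) ltac:(lra) ltac:(lra) ltac:(lra)) as [A B].
  replace (PI - b1 - (PI - b2)) with (b2 - b1) in A, B by ring.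
  rewrite Rabs_Ropp, Rabs_pos_eq by lra. split; [split|]; try lra; apply E; lra.
Qed.

Definition bnd K (u w : vinfo) : Prop :=
  0 <= posy w - posy u <= (INR (size (sub u)) - 1) * K * (1/(ang2 u - ang1 u)) /\
  Rabs (posx w - posx u) <= (INR (size (sub u)) - 1) * K * (1/(ang2 u - ang1 u)).

Definition pre (u w : vinfo) := exists s, addr w = addr u ++ s.

Definition Q K t := forall ad a1 a2 x y, 0 <= a1 -> a1 < a2 -> a2 <= PI ->
 (forall c, In c (children t) -> (a2-a1) * INR (size c) <= K * (INR (size t) - 1)) ->
 (forall w, In w (draw t ad a1 a2 x y) -> exists s, addr w = ad ++ s) /\
 (forall w, In w (draw t ad a1 a2 x y) -> bnd K (VInfo ad a1 a2 x y t) w) /\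
 (forall u w, In u (draw t ad a1 a2 x y) -> In w (draw t ad a1 a2 x y) -> pre u w -> bnd K u w).

Lemma in_sumsize c cs : In c cs -> (size c <= sumsize cs)%nat.
Proof. induction cs; simpl; intros H; [tauto|]. destruct H; subst; [lia|]. specialize (IHcs H); lia. Qed.

Lemma div_le a c p : 0 < p -> a <= c * p -> a / p <= c.
Proof. intros Hp H. apply (Rmult_le_reg_r p); auto. unfold Rdiv.
  rewrite Rmult_assoc, Rinv_l by lra. lra. Qed.

Lemma addr_idx (ad : list nat) j k s1 s2 : ad ++ j :: s1 = ad ++ k :: s2 -> j = k.
Proof. intros H. apply app_inv_head in H. injection H; auto. Qed.

Lemma size_pos t : 0 < INR (size t).
Proof. destruct t. rewrite size_node. apply lt_0_INR. lia. Qed.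

Lemma go_lemma K (HK : PI/2 <= K) ts ad a1 a2 x y :
 Forall (Q K) ts -> 0 <= a1 -> a1 < a2 -> a2 <= PI ->
 (forall c, In c ts -> (a2-a1) * INR (size c) <= K * (INR (size (Node ts)) - 1)) ->
 0 < INR (size (Node ts)) - 1 ->
 forall cs k b, (forall c, In c cs -> In c ts) -> a1 <= b ->
 b + (a2 - a1) * (INR (sumsize cs) / (INR (size (Node ts)) - 1)) <= a2 ->
 (forall w, In w (go (Node ts) ad a1 a2 x y cs k b) -> exists j s, (k <= j)%nat /\ addr w = ad ++ j :: s) /\
 (forall w, In w (go (Node ts) ad a1 a2 x y cs k b) -> bnd K (VInfo ad a1 a2 x y (Node ts)) w) /\
 (forall u w, In u (go (Node ts) ad a1 a2 x y cs k b) -> In w (go (Node ts) ad a1 a2 x y cs k b) -> pre u w -> bnd K u w).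
Proof.
  intros HF h1 h2 h3 Hch HS1 cs. induction cs as [|c cs IH]; intros k b Hsub Hb Hsum.
  { rewrite go_nil; simpl; tauto. }
  rewrite go_cons. cbv zeta.
  set (S1 := INR (size (Node ts)) - 1) in *.
  set (phi := a2 - a1) in *.
  set (b2 := b + phi * (INR (size c) / S1)).
  set (p := P2 b b2).
  assert (Hin : In c ts) by (apply Hsub; simpl; auto).
  pose proof (size_pos c) as Hsc.
  assert (Hss: INR (sumsize (c :: cs)) = INR (size c) + INR (sumsize cs)) by (simpl; apply plus_INR).
  pose proof (pos_INR (sumsize cs)) as Hss0.
  assert (Hphi: 0 < phi) by (unfold phi; lra).
  assert (Hsplit: phi * (INR (sumsize (c :: cs)) / S1) = phi * (INR (size c) / S1) + phi * (INR (sumsize cs) / S1))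
    by (rewrite Hss; unfold Rdiv; ring).
  assert (Hpos1: 0 < phi * (INR (size c) / S1)) by (apply Rmult_lt_0_compat; [lra| apply Rdiv_lt_0_compat; lra]).
  assert (Hpos2: 0 <= phi * (INR (sumsize cs) / S1)) by (apply Rmult_le_pos; [lra| apply Rmult_le_pos; [lra| left; apply Rinv_0_lt_compat; lra]]).
  assert (Hbb2: b < b2) by (unfold b2; lra).
  assert (Hb2: b2 + phi * (INR (sumsize cs) / S1) <= a2) by (unfold b2; lra).
  assert (HK2: b2 - b <= K).
  { unfold b2. replace (b + phi * (INR (size c) / S1) - b) with ((phi * INR (size c)) / S1) by (field; lra).
    apply div_le; [lra|apply Hch; auto]. }
  assert (HQ : Q K c) by (rewrite Forall_forall in HF; auto).
  destruct (HQ (ad ++ k :: nil) b b2 (x + fst p) (y + snd p)) as [C1 [C2 C3]]; try lra.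
  { destruct c as [gs]. intros g Hg. simpl in Hg. rewrite size_node, S_INR.
    pose proof (in_sumsize g gs Hg) as Hle. apply le_INR in Hle.
    pose proof (pos_INR (size g)).
    apply Rle_trans with (K * INR (size g)).
    - apply Rmult_le_compat_r; lra.
    - apply Rmult_le_compat_l; lra. }
  destruct (IH (S k) b2) as [R1 [R2 R3]]; try lra.
  { intros c' Hc'. apply Hsub; simpl; auto. }
  destruct (P2_bound K b b2 HK ltac:(lra) Hbb2 ltac:(lra) HK2) as [[sy0 sy1] sx].
  fold p in sy0, sy1, sx.
  assert (Id: (INR (size c) - 1) * K * (1 / (b2 - b)) + K * (1 / (b2 - b)) = S1 * K * (1 / phi))
    by (replace (b2 - b) with (phi * INR (size c) / S1) by (unfold b2; field; lra); field; repeat split; try lra; apply Rmult_integral_contrapositive; split; lra).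
  split; [|split].
  - intros w Hw. apply in_app_or in Hw. destruct Hw as [Hw|Hw].
    + destruct (C1 w Hw) as [s Hs]. exists k, s. split; auto. rewrite Hs, <- app_assoc. reflexivity.
    + destruct (R1 w Hw) as [j [s [Hj Hs]]]. exists j, s. split; auto; lia.
  - intros w Hw. apply in_app_or in Hw. destruct Hw as [Hw|Hw]; [|apply R2; auto].
    specialize (C2 w Hw). unfold bnd in C2 |- *. cbn [posx posy sub ang1 ang2] in C2 |- *. fold S1. fold phi.
    destruct C2 as [[y1 y2] xx]. split; [split|].
    + lra.
    + lra.
    + replace (posx w - x) with ((posx w - (x + fst p)) + fst p) by ring.
      eapply Rle_trans; [apply Rabs_triang|]. lra.
  - intros u w Hu Hw Hp. apply in_app_or in Hu. apply in_app_or in Hw.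
    destruct Hu as [Hu|Hu]; destruct Hw as [Hw|Hw]; auto.
    + exfalso. destruct (C1 u Hu) as [s1 Hs1]. destruct (R1 w Hw) as [j [s2 [Hj Hs2]]].
      destruct Hp as [s Hs]. rewrite Hs2, Hs1, <- !app_assoc in Hs. simpl in Hs.
      apply addr_idx in Hs. lia.
    + exfalso. destruct (C1 w Hw) as [s1 Hs1]. destruct (R1 u Hu) as [j [s2 [Hj Hs2]]].
      destruct Hp as [s Hs]. rewrite Hs2, Hs1, <- !app_assoc in Hs. simpl in Hs.
      apply addr_idx in Hs. lia.
Qed.

Lemma mainQ K (HK : PI/2 <= K) t : Q K t.
Proof.
  induction t as [ts IH] using tree_ind'.
  intros ad a1 a2 x y h1 h2 h3 Hch. simpl children in Hch.
  assert (HS1 : INR (size (Node ts)) - 1 = INR (sumsize ts)) by (rewrite size_node, S_INR; ring).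
  assert (HG:
   (forall w, In w (go (Node ts) ad a1 a2 x y ts 0 a1) -> exists j s, (0 <= j)%nat /\ addr w = ad ++ j :: s) /\
   (forall w, In w (go (Node ts) ad a1 a2 x y ts 0 a1) -> bnd K (VInfo ad a1 a2 x y (Node ts)) w) /\
   (forall u w, In u (go (Node ts) ad a1 a2 x y ts 0 a1) -> In w (go (Node ts) ad a1 a2 x y ts 0 a1) -> pre u w -> bnd K u w)).
  { destruct ts as [|c0 ts0] eqn:Ets.
    - rewrite go_nil; simpl; tauto.
    - rewrite <- Ets in *.
      assert (Hp : 0 < INR (size (Node ts)) - 1).
      { rewrite HS1, Ets. simpl. rewrite plus_INR. pose proof (size_pos c0). pose proof (pos_INR (sumsize ts0)). lra. }
      apply go_lemma; auto; try lra.
      rewrite <- HS1. replace (a1 + (a2 - a1) * ((INR (size (Node ts)) - 1) / (INR (size (Node ts)) - 1))) with a2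
        by (field; lra). lra. }
  destruct HG as [G1 [G2 G3]].
  rewrite draw_eq.
  assert (Hhead : bnd K (VInfo ad a1 a2 x y (Node ts)) (VInfo ad a1 a2 x y (Node ts))).
  { unfold bnd. cbn [posx posy sub ang1 ang2]. rewrite HS1.
    replace (y - y) with 0 by ring. replace (x - x) with 0 by ring. rewrite Rabs_R0.
    assert (0 <= INR (sumsize ts) * K * (1 / (a2 - a1))).
    { apply Rmult_le_pos. apply Rmult_le_pos. apply pos_INR. pose proof PI_RGT_0; lra.
      apply Rlt_le, Rdiv_lt_0_compat; lra. }
    lra. }
  split; [|split].
  - intros w [Hw|Hw]. + subst w. exists nil. simpl. rewrite app_nil_r; auto.
    + destruct (G1 w Hw) as [j [s [_ Hs]]]. eauto.
  - intros w [Hw|Hw]. + subst w. auto. + auto.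
  - intros u w [Hu|Hu] [Hw|Hw] Hp; subst; auto.
    exfalso. destruct (G1 u Hu) as [j [s [_ Hs]]]. destruct Hp as [s' Hs']. simpl in Hs'.
    rewrite Hs, <- app_assoc in Hs'. apply (f_equal (@length nat)) in Hs'.
    rewrite length_app in Hs'. simpl in Hs'. lia.
Qed.

Theorem lemma12 (t : tree) :
  (2 < size t)%nat ->
  gravity_rooted t ->
  forall u, In u (algorithm2 t) -> posx u = 0 ->
  let n := INR (size t) in
  let B := (INR (size (sub u)) - 1) * (PI / 2) * ((n - oddR (size t)) / (n - 1))
           * (1 / (ang2 u - ang1 u)) in
  forall w, In w (algorithm2 t) -> in_subtree u w ->
    0 <= posy w - posy u <= B /\ Rabs (posx w) <= B.
Proof.
  intros Hn Hg u Hu Hx n B w Hw Hsub.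
  pose proof PI_RGT_0 as Hpi.
  assert (Hn1 : 2 < n) by (unfold n; apply (lt_INR 2); lia).
  set (K := PI / 2 * ((n - oddR (size t)) / (n - 1))).
  assert (HK : PI / 2 <= K).
  { unfold K. rewrite <- (Rmult_1_r (PI/2)) at 1. apply Rmult_le_compat_l; [lra|].
    apply le_div_pos; [lra|]. unfold oddR. destruct (Nat.odd (size t)); lra. }
  destruct (mainQ K HK t nil 0 PI 0 0) as [_ [_ M]]; try lra.
  { intros c Hc. specialize (Hg c Hc). fold n. unfold K.
    replace (PI / 2 * ((n - oddR (size t)) / (n - 1)) * (n - 1)) with (PI / 2 * (n - oddR (size t))) by (field; lra).
    assert (H2 : 2 * INR (size c) <= n - oddR (size t)).
    { unfold n, oddR. destruct (Nat.odd (size t)) eqn:Eo.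
      - assert (2 * size c <> size t)%nat.
        { intros E. rewrite <- E in Eo. rewrite Nat.odd_mul in Eo. simpl in Eo. discriminate. }
        assert (2 * size c <= size t - 1)%nat by lia.
        apply le_INR in H0. rewrite mult_INR, minus_INR in H0 by lia. simpl in H0. lra.
      - apply le_INR in Hg. rewrite mult_INR in Hg. simpl in Hg. lra. }
    pose proof (pos_INR (size c)). nra. }
  destruct (M u w Hu Hw Hsub) as [A C].
  unfold B. replace ((INR (size (sub u)) - 1) * (PI / 2) * ((n - oddR (size t)) / (n - 1)))
    with ((INR (size (sub u)) - 1) * K) by (unfold K; ring).
  rewrite Hx, Rminus_0_r in C. auto.
Qed.
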